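(* Let $X_1,\dots,X_n$ be mutually independent random variables, $X_i$ taking values in a set $D_i$ according to a given distribution, with product distribution $\mu$, and let $A_1,\dots,A_m$ be events, $A_i$ determined by the variables indexed by $\mathrm{vbl}(A_i)\subseteq[n]$. Call distinct $i,j$ dependent if $\mathrm{vbl}(A_i)\cap\mathrm{vbl}(A_j)\ne\emptyset$, and assume that for every dependent pair $i,j$, $\Pr_\mu(A_i\wedge A_j)=0$. Consider the algorithm: draw all variables independently from their distributions; while at least one $A_i$ occurs, let $I$ be the set of indices of occurring events and independently resample all variables in $\bigcup_{i\in I}\mathrm{vbl}(A_i)$; when no $A_i$ occurs, output the current assignment. Then, when the algorithm halts, its output is distributed as $\mu$ conditioned on $\bigwedge_{i=1}^m\overline{A_i}$. *)

(* Defs.v *)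
From HB Require Import structures.
From mathcomp Require Import all_boot all_order all_algebra.
From mathcomp Require Import all_classical all_reals.
From mathcomp Require Import ereal sequences.
Set Implicit Arguments. Unset Strict Implicit. Unset Printing Implicit Defensive.
Import Order.TTheory GRing.Theory Num.Theory.
Local Open Scope ring_scope.

(* Variables X_i, i : 'I_n, with X_i taking values in the finite set D i
   with probability mass function p i. *)
Section PRS.
Context {R : realType} {n : nat} {D : 'I_n -> finType}.

Definition assign := {dffun forall i : 'I_n, D i}.

Variable p : forall i : 'I_n, D i -> R.

Definition mu (s : assign) : R := \prod_(i < n) p (s i).

Context {m : nat}.
Variables (vbl : 'I_m -> {set 'I_n}) (A : 'I_m -> pred assign).

Definition good (s : assign) : bool := [forall j, ~~ A j s].

Definition resample_set (s : assign) : {set 'I_n} :=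
  \bigcup_(j | A j s) vbl j.

(* one round of the algorithm from state s: variables in the resample set
   are redrawn independently, the others are kept. *)
Definition trans (s t : assign) : R :=
  if [forall i, (i \notin resample_set s) ==> (t i == s i)]
  then \prod_(i in resample_set s) p (t i) else 0.

(* badmass k t = Pr[ states at rounds 0..k-1 are all bad and state at
   round k is t ]  (round 0 = initial independent draw). *)
Fixpoint badmass (k : nat) : assign -> R :=
  match k with
  | 0 => mu
  | k'.+1 => fun t => \sum_(s | ~~ good s) badmass k' s * trans s t
  end.

(* probability that the algorithm halts exactly after k resampling rounds
   with output t *)
Definition halt_at (k : nat) (t : assign) : R :=
  if good t then badmass k t else 0.

Definition halt_out (t : assign) : \bar R :=
  (\sum_(0 <= k <oo) (halt_at k t)%:E)%E.

Definition halt_prob : \bar R := (\sum_(t : assign) halt_out t)%E.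

Definition cond_mu (t : assign) : R :=
  if good t then mu t / \sum_(s | good s) mu s else 0.

End PRS.

(* Main.v *)
Require Import Defs.
From HB Require Import structures.
From mathcomp Require Import all_boot all_order all_algebra.
From mathcomp Require Import all_classical all_reals.
From mathcomp Require Import ereal sequences.
Import Order.TTheory GRing.Theory Num.Theory.
Local Open Scope ring_scope.

Section Proof.
Variables (R : realType) (n m : nat) (D : 'I_n -> finType)
  (p : forall i : 'I_n, D i -> R)
  (vbl : 'I_m -> {set 'I_n}) (A : 'I_m -> pred (@assign n D)).
Hypothesis hp0 : forall (i : 'I_n) (x : D i), 0 <= p i x.
Hypothesis hA : forall (j : 'I_m) (s t : @assign n D),
          (forall i, i \in vbl j -> s i = t i) -> A j s = A j t.
Hypothesis hdep : forall i j : 'I_m, i != j -> vbl i :&: vbl j != finset.set0 ->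
          \sum_(s : @assign n D | A i s && A j s) mu p s = 0.

Set Implicit Arguments. Unset Strict Implicit.
Local Notation assign := (@assign n D).
Local Notation mu := (mu p).
Local Notation Res := (resample_set vbl A).
Definition JJ (s : assign) : {set 'I_m} := [set j | A j s].
Definition pi (s : assign) : R := \prod_(i in Res s) p i (s i).
Definition agree (s t : assign) : bool := [forall i, (i \notin Res s) ==> (t i == s i)].
Definition tr' (s t : assign) : R := if agree s t then pi s else 0.

Lemma mu_ge0 s : 0 <= mu s.
Proof. by apply: prodr_ge0 => i _. Qed.

Lemma mu_split (S : {set 'I_n}) s :
  mu s = (\prod_(i in S) p i (s i)) * \prod_(i in ~: S) p i (s i).
Proof.
rewrite /Defs.mu (bigID (fun i => i \in S)) /=; congr (_ * _);
by apply: eq_bigl => i; rewrite ?inE.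
Qed.

Lemma L1 s t : mu s * trans p vbl A s t = mu t * tr' s t.
Proof.
rewrite /trans /tr' -/(agree s t); case: ifP => ag; last by rewrite !mulr0.
rewrite (mu_split (Res s) s) (mu_split (Res s) t) /pi.
have -> : \prod_(i in ~: Res s) p i (s i) = \prod_(i in ~: Res s) p i (t i).
  apply: eq_bigr => i; rewrite inE => hi.
  by move/forallP: ag => /(_ i); rewrite hi /= => /eqP ->.
set a := \prod_(i in Res s) p i (s i); set b := \prod_(i in ~: Res s) p i (t i).
set c := \prod_(i in Res s) p i (t i).
by rewrite [LHS]mulrC [a * b]mulrC mulrA.
Qed.

Lemma mu_neq0 (s : assign) : mu s != 0 -> forall i, p i (s i) != 0.
Proof. by move=> h i; move: h; rewrite /Defs.mu prodf_seq_neq0 => /allP /(_ i (mem_index_enum _)). Qed.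

Lemma mu_neq0' (s : assign) : (forall i, p i (s i) != 0) -> mu s != 0.
Proof. by move=> h; rewrite /Defs.mu prodf_seq_neq0; apply/allP => i _; apply: h. Qed.

Lemma two_bad s j j0 : mu s != 0 -> j != j0 -> vbl j :&: vbl j0 != finset.set0 ->
  A j s -> A j0 s -> False.
Proof.
move=> hmu ne hint a1 a2; have := @hdep j j0 ne hint.
move/eqP; rewrite psumr_eq0; last by move=> *; apply: mu_ge0.
by move/allP => /(_ s (mem_index_enum _)); rewrite a1 a2 /= (negbTE hmu).
Qed.

Definition phi (t' s : assign) : assign :=
  finfun (fun i : 'I_n => if i \in Res s then s i else t' i).

Lemma phiE t' s i : phi t' s i = if i \in Res s then s i else t' i.
Proof. by rewrite /phi ffunE. Qed.

Definition Q (t s : assign) : bool := ~~ good A s && agree s t && (pi s != 0).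

Lemma resP (s : assign) i : reflect (exists2 j, A j s & i \in vbl j) (i \in Res s).
Proof. by apply: (iffP bigcupP) => -[j]; exists j. Qed.

Lemma pi_neq0 (s : assign) i : pi s != 0 -> i \in Res s -> p i (s i) != 0.
Proof.
rewrite /pi prodf_seq_neq0 => /allP h hi.
by have := h i (mem_index_enum _); rewrite hi.
Qed.

Lemma Q_mu t s : mu t != 0 -> Q t s -> mu s != 0.
Proof.
move=> ht /andP[/andP[_ ag] hpi]; apply: mu_neq0' => i.
case hi: (i \in Res s); first exact: pi_neq0.
move/forallP: ag => /(_ i); rewrite hi /= => /eqP <-.
exact: mu_neq0.
Qed.

Lemma phi_mu t' s : mu t' != 0 -> pi s != 0 -> mu (phi t' s) != 0.
Proof.
move=> ht hpi; apply: mu_neq0' => i; rewrite phiE.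
case hi: (i \in Res s); first exact: pi_neq0.
exact: mu_neq0.
Qed.

Lemma coreA t t' s : mu t != 0 -> mu t' != 0 -> JJ t = JJ t' -> Q t s ->
  forall j, A j (phi t' s) = A j s.
Proof.
move=> ht ht' hJ hQ j.
have hs := @Q_mu t s ht hQ.
have hpi : pi s != 0 by case/andP: hQ.
have ag : agree s t by case/andP: hQ => /andP[].
have hs' := @phi_mu t' s ht' hpi.
case: (boolP [exists i, (i \in vbl j) && (i \in Res s)]) => [/existsP[i /andP[iv /resP[j0 Aj0 iv0]]]|].
- have inR : forall i, i \in vbl j0 -> phi t' s i = s i.
    by move=> k kv; rewrite phiE; have -> : k \in Res s by apply/resP; exists j0.
  have Aj0' : A j0 (phi t' s) by rewrite (@hA j0 _ _ inR).
  case: (eqVneq j j0) => [->|ne]; first by rewrite Aj0 Aj0'.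
  have hint : vbl j :&: vbl j0 != finset.set0.
    by apply/set0Pn; exists i; rewrite inE iv iv0.
  case Ajs: (A j s); first by case: (@two_bad s j j0 hs ne hint Ajs Aj0).
  case Ajs': (A j (phi t' s)) => //.
  by case: (@two_bad _ j j0 hs' ne hint Ajs' Aj0').
- rewrite negb_exists => /forallP hno.
  have e1 : A j (phi t' s) = A j t'.
    apply: hA => i iv; rewrite phiE; have := hno i; rewrite iv /=.
    by move/negbTE ->.
  have e2 : A j s = A j t.
    apply: hA => i iv; have := hno i; rewrite iv /= => hi.
    by move/forallP: ag => /(_ i); rewrite hi /= => /eqP ->.
  rewrite e1 e2.
  have : (j \in JJ t) = (j \in JJ t') by rewrite hJ.
  by rewrite !inE.
Qed.

Lemma coreQ t t' s : mu t != 0 -> mu t' != 0 -> JJ t = JJ t' -> Q t s ->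
  [/\ Q t' (phi t' s), phi t (phi t' s) = s, tr' (phi t' s) t' = tr' s t
    & JJ (phi t' s) = JJ s].
Proof.
move=> ht ht' hJ hQ.
have hA' := coreA ht ht' hJ hQ.
have ag : agree s t by case/andP: hQ => /andP[].
have hRes : Res (phi t' s) = Res s.
  by rewrite /resample_set; apply: eq_bigl => j; rewrite hA'.
have hgood : good A (phi t' s) = good A s.
  by rewrite /good; apply: eq_forallb => j; rewrite hA'.
have hpi : pi (phi t' s) = pi s.
  by rewrite /pi hRes; apply: eq_bigr => i hi; rewrite phiE hi.
have ag' : agree (phi t' s) t'.
  by apply/forallP => i; apply/implyP; rewrite hRes phiE => /negbTE ->.
split.
- case/andP: hQ => /andP[hb _] hp.
  by rewrite /Q hgood hb ag' hpi hp.
- apply/ffunP => i; rewrite !phiE hRes; case hi: (i \in Res s) => //.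
  by move/forallP: ag => /(_ i); rewrite hi /= => /eqP.
- by rewrite /tr' ag ag' hpi.
- by apply/setP => j; rewrite !inE hA'.
Qed.

Section WithG.
Variable G : {set 'I_m} -> R.
Definition K (t : assign) : R := \sum_(s | ~~ good A s) tr' s t * G (JJ s).

Lemma K_Q t : K t = \sum_(s | Q t s) tr' s t * G (JJ s).
Proof.
rewrite /K big_mkcond [RHS]big_mkcond; apply: eq_bigr => s _.
rewrite /Q /tr'; case: (~~ good A s) => //=; case: (agree s t) => /=; last by rewrite mul0r.
by case: eqP => [->|]; rewrite ?mul0r.
Qed.

Lemma K_eq t t' : mu t != 0 -> mu t' != 0 -> JJ t = JJ t' -> K t = K t'.
Proof.
move=> ht ht' hJ; rewrite !K_Q.
rewrite (reindex_onto (phi t) (phi t')); last first.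
  by move=> s hs; case: (coreQ ht ht' hJ hs).
apply: eq_big => j.
- apply/idP/idP.
  + by case/andP => hq /eqP <-; case: (coreQ ht ht' hJ hq).
  + by move=> hq; case: (coreQ ht' ht (esym hJ) hq) => -> -> _ _; rewrite eqxx.
- move=> /andP[hq /eqP e].
  have hq' : Q t' j by rewrite -e; case: (coreQ ht ht' hJ hq).
  by case: (coreQ ht' ht (esym hJ) hq') => _ _ -> ->.
Qed.
End WithG.

Lemma trans_ge0 s t : 0 <= trans p vbl A s t.
Proof. by rewrite /trans; case: ifP => // _; apply: prodr_ge0 => i _. Qed.

Lemma badmass_ge0 k t : 0 <= badmass p vbl A k t.
Proof.
elim: k t => [|k IH] t /=; first exact: mu_ge0.
by apply: sumr_ge0 => s _; apply: mulr_ge0 => //; apply: trans_ge0.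
Qed.

Lemma inv k : exists G : {set 'I_m} -> R,
  forall t, badmass p vbl A k t = mu t * G (JJ t).
Proof.
elim: k => [|k [G hG]]; first by exists (fun _ => 1) => t; rewrite mulr1.
pose G' (J0 : {set 'I_m}) :=
  if [pick t | (JJ t == J0) && (mu t != 0)] is Some t0 then K G t0 else 0.
have step : forall t, badmass p vbl A k.+1 t = mu t * K G t.
  move=> t /=; rewrite /K mulr_sumr; apply: eq_bigr => s _.
  by rewrite hG mulrAC L1 mulrA mulrAC -mulrA.
exists G' => t; rewrite step /G'.
case: (eqVneq (mu t) 0) => [->|ht]; first by rewrite !mul0r.
case: pickP => [t0 /andP[/eqP hJ ht0]|hn]; first by rewrite (K_eq G ht ht0 (esym hJ)).
by have := hn t; rewrite eqxx ht.
Qed.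

Definition c k : R :=
  if [pick t | good A t && (mu t != 0)] is Some t0 then badmass p vbl A k t0 / mu t0 else 0.

Lemma c_ge0 k : 0 <= c k.
Proof.
rewrite /c; case: pickP => // t0 /andP[_ h].
by apply: divr_ge0; [apply: badmass_ge0 | apply: mu_ge0].
Qed.

Lemma good_JJ t : good A t -> JJ t = finset.set0.
Proof.
move=> /forallP h; apply/setP => j; rewrite !inE.
by apply/negbTE; apply: h.
Qed.

Lemma halt_at_eq k t : halt_at p vbl A k t = if good A t then mu t * c k else 0.
Proof.
rewrite /halt_at; case: ifP => // hg.
have [G hG] := inv k.
rewrite hG /c; case: (eqVneq (mu t) 0) => [->|ht]; first by rewrite !mul0r.
case: pickP => [t0 /andP[hg0 ht0]|hn]; last by have := hn t; rewrite hg ht.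
by rewrite hG mulrAC mulfV // mul1r (good_JJ hg) (good_JJ hg0).
Qed.

Lemma final (hhalt : (0 < halt_prob p vbl A)%E) t :
  halt_out p vbl A t = (halt_prob p vbl A * (cond_mu p A t)%:E)%E.
Proof.
set C := (\sum_(0 <= k <oo) (c k)%:E)%E.
have HO : forall t, halt_out p vbl A t = if good A t then ((mu t)%:E * C)%E else 0%E.
  move=> u; rewrite /halt_out; case: ifP => hg.
    rewrite -nneseriesZl; last by move=> i _; rewrite lee_fin c_ge0.
    by apply: eq_eseriesr => k _; rewrite halt_at_eq hg EFinM.
  by apply: eseries0 => k _ _; rewrite halt_at_eq hg.
set Z := \sum_(s | good A s) mu s.
have HP : halt_prob p vbl A = (Z%:E * C)%E.
  rewrite /halt_prob (eq_bigr _ (fun u _ => HO u)) -big_mkcond /= /Z.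
  rewrite -sumEFin.
  rewrite ge0_sume_distrl // => u _; rewrite lee_fin; exact: mu_ge0.
rewrite HO /cond_mu -/Z; case: ifP => hg; last by rewrite mule0.
have hZ : Z != 0.
  apply/eqP => hZ; move: hhalt; rewrite HP hZ mul0e; by rewrite ltxx.
by rewrite HP muleAC -EFinM [Z * _]mulrC divfK.
Qed.
End Proof.

Theorem theorem8 (R : realType) (n m : nat) (D : 'I_n -> finType)
  (p : forall i : 'I_n, D i -> R)
  (vbl : 'I_m -> {set 'I_n}) (A : 'I_m -> pred (@assign n D))
  (hp0 : forall (i : 'I_n) (x : D i), 0 <= p i x)
  (hp1 : forall i : 'I_n, \sum_(x : D i) p i x = 1)
  (hA : forall (j : 'I_m) (s t : @assign n D),
          (forall i, i \in vbl j -> s i = t i) -> A j s = A j t)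
  (hdep : forall i j : 'I_m, i != j -> vbl i :&: vbl j != finset.set0 ->
          \sum_(s : @assign n D | A i s && A j s) mu p s = 0)
  (hhalt : (0 < halt_prob p vbl A)%E) :
  forall t : @assign n D,
    halt_out p vbl A t = (halt_prob p vbl A * (cond_mu p A t)%:E)%E.
Proof.
move=> t; exact: (final hp0 hA hdep hhalt).
Qed.
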